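(* Let $\mathbf{G}=\begin{bmatrix}\mathbf{G}_1\\ \mathbf{G}_0\end{bmatrix}\in\mathbb{F}_2^{m\times n}$ be a triorthogonal matrix with linearly independent rows ($\mathbf{G}_1\in\mathbb{F}_2^{k\times n}$ the odd-weight rows, $\mathbf{G}_0$ the even-weight rows), and let $\mathcal{Q}^T=\mathrm{CSS}(\mathcal{C}_1,\mathcal{C}_2)$ be the associated triorthogonal $[[n,k,d]]$ code, with $\mathcal{C}_1$ generated by $\mathbf{G}$ and $\mathcal{C}_2$ the dual of the code generated by $\mathbf{G}_0$; assume $\mathcal{Q}^T$ is T-triorthogonal. Let $\mathcal{C}\subseteq\mathbb{F}_2^n$ be a binary linear code with $\mathcal{C}_1\subset\mathcal{C}\subset\mathcal{C}_2$ such that $\mathcal{Q}^{\rm Sym}=\mathrm{CSS}(\mathcal{C},\mathcal{C})$ is a symmetric $[[n,k,d']]$ CSS code. Then $\mathcal{Q}^T$ and $\mathcal{Q}^{\rm Sym}$ form a CNOT-transversal code pair (with $\mathcal{Q}^T$ as control and $\mathcal{Q}^{\rm Sym}$ as target), and $d'\ge d$.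
   Context: A binary matrix $\mathbf{G}=[G_{ij}]$ is triorthogonal if $\sum_i G_{ai}G_{bi}=0\pmod 2$ for all rows $a\ne b$ and $\sum_i G_{ai}G_{bi}G_{ci}=0\pmod 2$ for all distinct rows $a,b,c$. For binary linear codes $\mathcal{C}_a,\mathcal{C}_b\subseteq\mathbb{F}_2^n$ with $\mathcal{C}_b^\perp\subset\mathcal{C}_a$, $\mathrm{CSS}(\mathcal{C}_a,\mathcal{C}_b)$ is spanned by $|\bm{\psi}\rangle_L=|\mathcal{C}_b^\perp|^{-1/2}\sum_{\mathbf{y}\in\mathcal{C}_b^\perp}|\bm{\psi}\mathbf{A}+\mathbf{y}\rangle$, $\bm{\psi}\in\mathbb{F}_2^k$, where $\mathbf{A}\in\mathbb{F}_2^{k\times n}$ (a mapping matrix) has rows forming representatives of a basis of $\mathcal{C}_a/\mathcal{C}_b^\perp$; its number of logical qubits is $k=\dim\mathcal{C}_a+\dim\mathcal{C}_b-n$ and its distance is $\min(d_a',d_b')$ where $d_a'$ is the minimum Hamming weight of vectors in $\mathcal{C}_a\setminus\mathcal{C}_b^\perp$ and $d_b'$ that of vectors in $\mathcal{C}_b\setminus\mathcal{C}_a^\perp$. A CSS code is symmetric if $\mathcal{C}_a=\mathcal{C}_b$ (so $\mathcal{C}^\perp\subseteq\mathcal{C}$). The triorthogonal code uses mapping matrix $\mathbf{G}_1$. It is called T-triorthogonal if it is Pauli $X$-transversal (applying $\mathbf{X}$ to every physical qubit implements logical $\mathbf{X}$ on every logical qubit); such codes are also transversal for the gate $\mathbf{T}=\mathrm{diag}(1,e^{i\pi/4})$.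 Two codes $\mathcal{Q}_1,\mathcal{Q}_2$ of length $n$ with $k$ logical qubits form a CNOT-transversal pair (control $\mathcal{Q}_1$, target $\mathcal{Q}_2$) if, for suitable mapping matrices defining their logical bases, applying a physical CNOT from qubit $i$ of the $\mathcal{Q}_1$ block to qubit $i$ of the $\mathcal{Q}_2$ block for every $i=1,\dots,n$ maps $|\bm{\psi}\rangle_L\otimes|\bm{\phi}\rangle_L\mapsto|\bm{\psi}\rangle_L\otimes|\bm{\psi}+\bm{\phi}\rangle_L$ for all $\bm{\psi},\bm{\phi}\in\mathbb{F}_2^k$, i.e., implements logical CNOT between corresponding logical qubits. *)

(* Defs.v *)
(* Binary codes are row spaces of matrices over 'F_2;
   quantum states are amplitude functions on computational basis vectors,
   with amplitudes in algC (algebraic complex numbers). *)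
From HB Require Import structures.
From mathcomp Require Import all_boot all_order all_algebra all_field.
Set Implicit Arguments. Unset Strict Implicit. Unset Printing Implicit Defensive.
Import GRing.Theory Num.Theory.
Local Open Scope ring_scope.

Notation F2 := 'F_2.

Definition wt n (v : 'rV[F2]_n) : nat := #|[set i : 'I_n | v 0 i != 0]|.

Definition triorthogonal m n (G : 'M[F2]_(m, n)) : Prop :=
  (forall a b : 'I_m, a != b -> \sum_(i < n) G a i * G b i = 0) /\
  (forall a b c : 'I_m, a != b -> b != c -> a != c ->
      \sum_(i < n) G a i * G b i * G c i = 0).

Definition dualmx r n (C : 'M[F2]_(r, n)) : 'M[F2]_n := kermx C^T.

Definition code_card r n (C : 'M[F2]_(r, n)) : nat :=
  #|[set y : 'rV[F2]_n | (y <= C)%MS]|.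

(* A is a mapping matrix for CSS(Ca, Cb): its rows are representatives of a
   basis of Ca / Cb^perp *)
Definition is_mapping ra rb n k (Ca : 'M[F2]_(ra, n)) (Cb : 'M[F2]_(rb, n))
    (A : 'M[F2]_(k, n)) : Prop :=
  (A <= Ca)%MS /\ (Ca <= A + dualmx Cb)%MS /\
  (forall psi : 'rV[F2]_k, (psi *m A <= dualmx Cb)%MS -> psi = 0).

Definition qstate n := 'rV[F2]_n -> algC.
Definition qstate2 n := 'rV[F2]_n -> 'rV[F2]_n -> algC.

Definition tensor n (s t : qstate n) : qstate2 n := fun x y => s x * t y.

(* logical basis state |psi>_L of CSS(Ca, Cb) with mapping matrix A:
   |C_b^perp|^{-1/2} sum_{y in C_b^perp} |psi A + y> *)
Definition logical_state rb n k (Cb : 'M[F2]_(rb, n)) (A : 'M[F2]_(k, n))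
    (psi : 'rV[F2]_k) : qstate n :=
  fun x => if (x - psi *m A <= dualmx Cb)%MS
           then (sqrtC (code_card (dualmx Cb))%:R)^-1 else 0.

(* physical X on every qubit: |x> |-> |x + 1> *)
Definition transX n (s : qstate n) : qstate n := fun x => s (x - const_mx 1).

(* physical CNOT from qubit i of block 1 to qubit i of block 2, for all i:
   |x>|z> |-> |x>|x + z> *)
Definition transCNOT n (S : qstate2 n) : qstate2 n := fun x y => S x (y - x).

Definition X_transversal rb n k (Cb : 'M[F2]_(rb, n)) (A : 'M[F2]_(k, n)) : Prop :=
  forall psi : 'rV[F2]_k,
    transX (logical_state Cb A psi) = logical_state Cb A (psi + const_mx 1).

Definition CNOT_transversal r1 r2 n k (Cb1 : 'M[F2]_(r1, n)) (A1 : 'M[F2]_(k, n))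
    (Cb2 : 'M[F2]_(r2, n)) (A2 : 'M[F2]_(k, n)) : Prop :=
  forall psi phi : 'rV[F2]_k,
    transCNOT (tensor (logical_state Cb1 A1 psi) (logical_state Cb2 A2 phi)) =
    tensor (logical_state Cb1 A1 psi) (logical_state Cb2 A2 (psi + phi)).

Definition css_cand ra rb n (Ca : 'M[F2]_(ra, n)) (Cb : 'M[F2]_(rb, n))
    (v : 'rV[F2]_n) : bool :=
  ((v <= Ca)%MS && ~~ (v <= dualmx Cb)%MS) ||
  ((v <= Cb)%MS && ~~ (v <= dualmx Ca)%MS).

Definition is_css_distance ra rb n (Ca : 'M[F2]_(ra, n)) (Cb : 'M[F2]_(rb, n))
    (d : nat) : Prop :=
  (exists2 v, css_cand Ca Cb v & wt v = d) /\
  (forall v, css_cand Ca Cb v -> (d <= wt v)%N).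

(* Main.v *)
Require Import Defs.
From HB Require Import structures.
From mathcomp Require Import all_boot all_order all_algebra all_field.
From Stdlib Require Import FunctionalExtensionality.
From mathcomp Require Import zify.
Import GRing.Theory Num.Theory.
Local Open Scope ring_scope.

Lemma f2_cases (x : 'F_2) : x = 0 \/ x = 1.
Proof. case: x => [[|[|m]] Hm]; [left|right|]; try by apply/val_inj.
by move: Hm; rewrite pdiv_id. Qed.
Lemma f2sq (x : 'F_2) : x * x = x. Proof. by case: (f2_cases x) => ->; rewrite ?mul0r ?mul1r. Qed.
Lemma f2b (x : 'F_2) : x = (x != 0)%:R. Proof. by case: (f2_cases x) => ->; rewrite ?eqxx ?oner_eq0. Qed.
Lemma f2nat (m : nat) : (m%:R : 'F_2) = (odd m)%:R.
Proof. by rewrite -modn2 Fp_nat_mod. Qed.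

Lemma dual_rev r1 r2 n (A : 'M['F_2]_(r1,n)) (B : 'M['F_2]_(r2,n)) :
  (A <= B)%MS -> (dualmx B <= dualmx A)%MS.
Proof.
move=> /submxP [X ->]; rewrite /dualmx sub_kermx trmx_mul mulmxA.
by rewrite mulmx_ker mul0mx.
Qed.

Lemma G1G1T n k m0 (G1 : 'M['F_2]_(k, n)) (G0 : 'M['F_2]_(m0, n)) :
  triorthogonal (col_mx G1 G0) ->
  (forall i : 'I_k, odd (wt (row i G1))) ->
  G1 *m G1^T = 1%:M.
Proof.
move=> [Hto _] Hodd; apply/matrixP => i j; rewrite !mxE.
under eq_bigr do rewrite mxE.
case: (eqVneq i j) => [<-|nij].
- under eq_bigr do rewrite f2sq. idtac.
  rewrite (eq_bigr (fun l => if G1 i l != 0 then 1 else 0));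
    last by move=> l _; rewrite {1}[G1 i l]f2b; case: (G1 i l != 0).
  rewrite -big_mkcond sumr_const f2nat.
  suff -> : #|fun l => G1 i l != 0| = wt (row i G1) by rewrite Hodd.
  by rewrite /wt; apply: eq_card => l; rewrite !inE mxE.
- have := Hto (lshift m0 i) (lshift m0 j).
  rewrite (inj_eq (@lshift_inj _ _)) => /(_ nij) H.
  rewrite (_ : false%:R = 0) //; apply: (etrans _ H); apply: eq_bigr => l _.
  by rewrite !col_mxEu.
Qed.

Lemma zm (V : zmodType) (y x a b : V) : y - (a + b) = (y - x - b) + (x - a).
Proof. by rewrite opprD addrA (addrAC y) [RHS]addrA; congr (_ - _); rewrite addrAC subrK. Qed.

Lemma cnot_aux (c1 c2 : algC) (b1 b2 b3 : bool) : (b1 -> b2 = b3) ->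
  (if b1 then c1 else 0) * (if b2 then c2 else 0) =
  (if b1 then c1 else 0) * (if b3 then c2 else 0).
Proof. by case: b1 => [->//|_]; rewrite !mul0r. Qed.

Theorem lemma1 (n k m0 : nat) (G1 : 'M['F_2]_(k, n)) (G0 : 'M['F_2]_(m0, n))
    (C : 'M['F_2]_n) (d d' : nat) :
  triorthogonal (col_mx G1 G0) ->
  row_free (col_mx G1 G0) ->
  (forall i : 'I_k, odd (wt (row i G1))) ->
  (forall i : 'I_m0, ~~ odd (wt (row i G0))) ->
  X_transversal (dualmx G0) G1 ->
  (col_mx G1 G0 <= C)%MS ->
  (C <= dualmx G0)%MS ->
  (dualmx C <= C)%MS ->
  (\rank C + \rank C)%N = (n + k)%N ->
  is_css_distance (col_mx G1 G0) (dualmx G0) d ->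
  is_css_distance C C d' ->
  (exists A2 : 'M['F_2]_(k, n),
     is_mapping C C A2 /\ CNOT_transversal (dualmx G0) G1 C A2) /\
  (d <= d')%N.
Proof.
move=> Htri _ Hodd _ _ HGC HCG0 HdC Hrk Hd Hd'.
have GG := @G1G1T _ _ _ G1 G0 Htri Hodd.
have G1C : (G1 <= C)%MS by move: HGC; rewrite col_mx_sub => /andP [].
have orth : forall r (w : 'M_(r, n)), (w <= dualmx C)%MS -> w *m G1^T = 0.
  move=> r w; rewrite /dualmx sub_kermx => /eqP wC.
  by case/submxP: G1C => X ->; rewrite trmx_mul mulmxA wC mul0mx.
have inj : forall psi : 'rV_k, (psi *m G1 <= dualmx C)%MS -> psi = 0.
  by move=> psi /orth; rewrite -mulmxA GG mulmx1.
have rkG1 : \rank G1 = k.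
  apply/eqP; rewrite eqn_leq rank_leq_row /=.
  by rewrite -{1}(mxrank1 'F_2 k) -GG mxrankM_maxl.
have rkD : \rank (dualmx C) = (n - \rank C)%N by rewrite mxrank_ker mxrank_tr.
have cap0 : (G1 :&: dualmx C)%MS = 0.
  apply/eqP/rowV0P => v; rewrite sub_capmx => /andP [/submxP [psi ->] /inj ->].
  by rewrite mul0mx.
have CGD : (C <= G1 + dualmx C)%MS.
  have sub : (G1 + dualmx C <= C)%MS by rewrite addsmx_sub G1C HdC.
  rewrite -(mxrank_leqif_sup sub).2.
  have := mxrank_sum_cap G1 (dualmx C); rewrite cap0 mxrank0 rkG1 rkD addn0 => ->.
  by have := rank_leq_col C; move=> ?; apply/eqP; lia.
have DD : (dualmx (dualmx G0) <= dualmx C)%MS by apply: dual_rev.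
split.
  exists G1; split; first by split; [|split].
  move=> psi phi; apply: functional_extensionality => x.
  apply: functional_extensionality => y.
  rewrite /transCNOT /tensor /logical_state.
  apply: cnot_aux => hx.
  have hx' := submx_trans hx DD.
  have e : y - (psi + phi) *m G1 = (y - x - phi *m G1) + (x - psi *m G1).
    by rewrite mulmxDl (zm _ y x).
  have e2 : y - x - phi *m G1 = (y - (psi + phi) *m G1) - (x - psi *m G1).
    by rewrite e addrK.
  apply/idP/idP => h.
    rewrite e; exact: addmx_sub h hx'.
  rewrite e2; apply: (addmx_sub h); rewrite eqmx_opp; exact: hx'.
case: Hd' => [[v0 hv0 <-] _]; case: Hd => [_ Hdmin]; apply: Hdmin.
move: hv0; rewrite /css_cand orbb => /andP [vC nvD].
apply/orP; right; rewrite (submx_trans vC HCG0) /=.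
apply/negP; rewrite /dualmx sub_kermx tr_col_mx mul_mx_row -row_mx0.
move=> /eqP /eq_row_mx [h1 _].
apply: (negP nvD).
case/sub_addsmxP: (submx_trans vC CGD) => [[psi w] /= ev].
have wD : (w *m dualmx C <= dualmx C)%MS by apply: submxMl.
have psi0 : psi = 0.
  by move: h1; rewrite ev mulmxDl -mulmxA GG mulmx1 (orth _ _ wD) addr0.
by rewrite ev psi0 mul0mx add0r.
Qed.
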